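(* Let $N \geq 2$ and, for each generation $t \in \{1,2,\dots\}$, let $\nu_t^{(1:N)} = (\nu_t^{(1)},\dots,\nu_t^{(N)})$ be non-negative integers with $\sum_{i=1}^N \nu_t^{(i)} = N$. Define $$c_N(t) := \frac{1}{(N)_2}\sum_{i=1}^N (\nu_t^{(i)})_2, \qquad D_N(t) := \frac{1}{N(N)_2}\sum_{i=1}^N (\nu_t^{(i)})_2\Big\{\nu_t^{(i)} + \frac1N\sum_{j\neq i}(\nu_t^{(j)})^2\Big\},$$ and $\tau_N(u) := \inf\{ s \in \{0,1,2,\dots\} : \sum_{r=1}^s c_N(r) \geq u\}$ for $u \geq 0$ (an empty sum being $0$, so $\tau_N(0)=0$). Then for all $t \in \{1,2,\dots\}$ and all real $t' > s' \geq 0$ with $\tau_N(t') < \infty$: (a) $0 \leq D_N(t) \leq c_N(t) \leq 1$; (b) $t' - (s'+1)\mathbb{1}_{(0,\infty)}(s') \leq \sum_{r=\tau_N(s')+1}^{\tau_N(t')} c_N(r) \leq t'+1$; (c) $\tau_N(t') \geq t'$.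
   Context: $(x)_k := x(x-1)\cdots(x-k+1)$ denotes the falling factorial. $\nu_t^{(i)}$ is interpreted as the number of offspring in generation $t-1$ of individual $i$ in generation $t$ (generations labelled backwards in time), but the claim only uses that the $\nu_t^{(i)}$ are non-negative integers summing to $N$. *)

(* Defs.v *)
From HB Require Import structures.
From mathcomp Require Import all_boot all_order all_algebra.
From mathcomp Require Import boolp reals.
Set Implicit Arguments. Unset Strict Implicit. Unset Printing Implicit Defensive.
Import Order.TTheory GRing.Theory Num.Theory.
Local Open Scope ring_scope.

Section Defs.
Variable R : realType.

(* nu t i : offspring count of individual i (i : 'I_N) in generation t.
   Falling factorial (x)_2 is x ^_ 2 (binomial.v). *)
Definition cN (N : nat) (nu : nat -> 'I_N -> nat) (t : nat) : R :=
  (N ^_ 2)%:R^-1 * \sum_(i < N) ((nu t i) ^_ 2)%:R.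

Definition DN (N : nat) (nu : nat -> 'I_N -> nat) (t : nat) : R :=
  ((N * N ^_ 2)%:R)^-1 *
  \sum_(i < N) ((nu t i) ^_ 2)%:R *
     ((nu t i)%:R + N%:R^-1 * \sum_(j < N | j != i) ((nu t j)%:R) ^+ 2).

Definition partial (c : nat -> R) (s : nat) : R := \sum_(1 <= r < s.+1) c r.

(* tau c u = inf { s : nat | partial c s >= u }, None encoding +infinity *)
Definition tau (c : nat -> R) (u : R) : option nat :=
  match pselect (exists s, u <= partial c s) with
  | left h => Some (ex_minn h)
  | right _ => None
  end.

End Defs.

(* Main.v *)
Require Import Defs.
From HB Require Import structures.
From mathcomp Require Import all_boot all_order all_algebra.
From mathcomp Require Import boolp reals.
From mathcomp Require Import lra zify.
Import Order.TTheory GRing.Theory Num.Theory.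
Local Open Scope ring_scope.

Section Aux.
Variable R : realType.
Variable c : nat -> R.
Hypothesis c01 : forall r, (1 <= r)%N -> 0 <= c r <= 1.

Lemma tauP u T : tau c u = Some T ->
  u <= partial c T /\ forall s, u <= partial c s -> (T <= s)%N.
Proof.
rewrite /tau; case: pselect => // h [<-].
case: ex_minnP => m Hm Hmin; split => // s Hs; exact: Hmin.
Qed.

Lemma partialS s : partial c s.+1 = partial c s + c s.+1.
Proof. by rewrite /partial big_nat_recr. Qed.

Lemma partial0 : partial c 0 = 0.
Proof. by rewrite /partial big_geq. Qed.

Lemma partial_split S T : (S <= T)%N ->
  \sum_(S.+1 <= r < T.+1) c r = partial c T - partial c S.
Proof.
move=> hST; rewrite /partial (@big_cat_nat _ _ _ S.+1 1 T.+1) //=; lra.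
Qed.

Lemma sum_ge0 S T : 0 <= \sum_(S.+1 <= r < T.+1) c r.
Proof.
rewrite big_nat; apply: sumr_ge0 => r /andP[h _].
by have /andP[] := @c01 r (leq_trans (ltn0Sn S) h) => //.
Qed.

Lemma partial_ge0 s : 0 <= partial c s.
Proof. exact: (sum_ge0 0 s). Qed.

Lemma partial_mono s t : (s <= t)%N -> partial c s <= partial c t.
Proof.
move=> h; have := partial_split _ _ h; have := sum_ge0 s t; lra.
Qed.

Lemma partial_le s : partial c s <= s%:R.
Proof.
elim: s => [|s IH]; first by rewrite partial0.
rewrite partialS -natr1; have /andP[_ ] := @c01 s.+1 (ltn0Sn s); lra.
Qed.

End Aux.

Lemma ff2 n : (n ^_ 2 = n * (n - 1))%N.
Proof. by rewrite ffactnSr ffactn1. Qed.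

Lemma nat_part (N : nat) (v : 'I_N -> nat) (hs : (\sum_(i < N) v i)%N = N) (i : 'I_N) :
  (N * v i + \sum_(j < N | j != i) (v j) ^ 2 <= N * N)%N.
Proof.
have hs' := hs; rewrite (bigD1 i) //= in hs'.
set X := (\sum_(j < N | j != i) v j)%N in hs'.
have hj : forall j, j != i -> (v j <= N - v i)%N.
  move=> j ji; rewrite /X (bigD1 j) //= in hs'; lia.
have : (\sum_(j < N | j != i) (v j) ^ 2 <= \sum_(j < N | j != i) v j * (N - v i))%N.
  by apply: leq_sum => j ji; rewrite expnS expn1 leq_mul2l hj ?orbT.
rewrite -big_distrl /= -/X.
have -> : X = (N - v i)%N by lia.
move=> h; have hv : (v i <= N)%N by lia.
nia.
Qed.

Lemma part_a (R : realType) (N : nat) (hN : (2 <= N)%N) (nu : nat -> 'I_N -> nat) t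
  (hs : (\sum_(i < N) nu t i)%N = N) :
  0 <= DN R nu t /\ DN R nu t <= cN R nu t /\ cN R nu t <= 1.
Proof.
have NN0 : 0 < (N ^_ 2)%:R :> R by rewrite ltr0n ff2 muln_gt0; apply/andP; lia.
have N0 : 0 < N%:R :> R by rewrite ltr0n; lia.
split; [|split].
- rewrite /DN; apply: mulr_ge0; first by rewrite invr_ge0 ler0n.
  apply: sumr_ge0 => i _; apply: mulr_ge0 => //; apply: addr_ge0 => //.
  apply: mulr_ge0; first by rewrite invr_ge0 ler0n.
  by apply: sumr_ge0 => j _; apply: sqr_ge0.
- have key : \sum_(i < N) ((nu t i) ^_ 2)%:R *
     ((nu t i)%:R + N%:R^-1 * \sum_(j < N | j != i) ((nu t j)%:R) ^+ 2)
     <= N%:R * \sum_(i < N) ((nu t i) ^_ 2)%:R :> R.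
    rewrite mulr_sumr; apply: ler_sum => i _.
    rewrite [X in _ <= X]mulrC; apply: ler_wpM2l => //.
    have h := nat_part _ _ hs i.
    have hr : N%:R * (nu t i)%:R + \sum_(j < N | j != i) ((nu t j)%:R) ^+ 2 <= N%:R * N%:R :> R.
      by rewrite -!natrM -(eq_bigr _ (fun j _ => natrX _ _ _)) -natr_sum -natrD ler_nat.
    set Y := \sum_(j < N | j != i) _ in hr *.
    rewrite -(ler_pM2l N0) mulrDr mulrA mulfV ?mul1r //; last by rewrite gt_eqF.
  rewrite /DN /cN natrM invfM mulrAC -mulrA mulrA [X in X <= _]mulrC; apply: ler_wpM2l; first by rewrite invr_ge0 ler0n.
  by rewrite ler_pdivrMl.
- rewrite /cN ler_pdivrMl // mulr1 -natr_sum ler_nat.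
  have : (\sum_(i < N) (nu t i) ^_ 2 <= \sum_(i < N) nu t i * (N - 1))%N.
    apply: leq_sum => i _; rewrite ff2 leq_mul2l; apply/orP; right.
    have : (nu t i <= N)%N by rewrite -[X in (_ <= X)%N]hs (bigD1 i) //= leq_addr.
    lia.
  by rewrite -big_distrl /= hs ff2.
Qed.

Theorem proposition1 (R : realType) (N : nat) (hN : (2 <= N)%N)
  (nu : nat -> 'I_N -> nat)
  (hsum : forall t, (1 <= t)%N -> (\sum_(i < N) nu t i)%N = N) :
  (forall t, (1 <= t)%N ->
     0 <= DN R nu t /\ DN R nu t <= cN R nu t /\ cN R nu t <= 1) /\
  (forall (t' s' : R) (T S : nat), 0 <= s' -> s' < t' ->
     tau (cN R nu) t' = Some T -> tau (cN R nu) s' = Some S ->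
     [/\ t' - (s' + 1) * (if 0 < s' then 1 else 0)
           <= \sum_(S.+1 <= r < T.+1) cN R nu r,
         \sum_(S.+1 <= r < T.+1) cN R nu r <= t' + 1
       & t' <= T%:R]).
Proof.
have pa : forall t, (1 <= t)%N ->
     0 <= DN R nu t /\ DN R nu t <= cN R nu t /\ cN R nu t <= 1.
  by move=> t ht; apply: part_a => //; apply: hsum.
split => // t' s' T S s0 st hT hS.
have c01 : forall r, (1 <= r)%N -> 0 <= cN R nu r <= 1.
  move=> r hr; have [h1 [h2 h3]] := pa r hr; apply/andP; split => //; lra.
have [tT minT] := tauP _ _ _ _ hT.
have [sS minS] := tauP _ _ _ _ hS.
have hST : (S <= T)%N by apply: minS; lra.
rewrite (partial_split _ _ _ _ hST).
have pT := partial_le _ _ c01 T.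
have pS0 := partial_ge0 _ _ c01 S.
have upT : partial (cN R nu) T <= t' + 1.
  case: T minT tT pT hST {hT} => [|T'] minT tT pT hST; first by rewrite partial0; lra.
  have : partial (cN R nu) T' < t'.
    rewrite ltNge; apply/negP => /minT; lia.
  rewrite partialS; have /andP[_] := c01 T'.+1 (ltn0Sn _); lra.
split; [|lra|lra].
case: ifP => hs'.
- case: S minS sS pS0 hST {hS} => [|S'] minS sS pS0 hST.
    rewrite partial0 in sS; lra.
  have : partial (cN R nu) S' < s'.
    rewrite ltNge; apply/negP => /minS; lia.
  rewrite partialS; have /andP[_] := c01 S'.+1 (ltn0Sn _); lra.
- have s'0 : s' = 0 by move/negbT: hs'; rewrite -leNgt => h; apply/eqP; rewrite eq_le s0 h.
  have : (S <= 0)%N by apply: minS; rewrite partial0 s'0.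
  rewrite leqn0 => /eqP S0; rewrite S0 partial0; lra.
Qed.
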